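(* Let $V$ be a commutative unital quantale whose underlying lattice is a frame. The full subcategory $\mathsf{VGrp}_{\mathrm{sym}}$ of symmetric $V$-groups is both a reflective and a coreflective subcategory of $\mathsf{VGrp}$.
   Context: A commutative unital quantale $V$ is a complete lattice with a commutative associative operation $\otimes$ with unit $k$ preserving arbitrary joins in each variable; standing assumption: as a lattice $V$ is a frame. A $V$-category $(X,a)$: $a\colon X\times X\to V$ with $k\le a(x,x)$ and $a(x,x')\otimes a(x',x'')\le a(x,x'')$; it is symmetric if $a(x,x')=a(x',x)$ for all $x,x'$. A $V$-group $(X,a,+)$ is a $V$-category with a group structure (additive, not necessarily abelian) such that $a(x_1,x_2)\otimes a(x_1',x_2')\le a(x_1+x_1',x_2+x_2')$; $V$-homomorphisms are group homomorphisms $f$ with $a(x,x')\le b(f(x),f(x'))$; category $\mathsf{VGrp}$. A symmetric $V$-group is a $V$-group whose $V$-category is symmetric. *)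

(* Defs.v *)
Set Implicit Arguments.

Record Quantale := {
  qcar :> Type;
  qle : qcar -> qcar -> Prop;
  qle_refl : forall a, qle a a;
  qle_trans : forall a b c, qle a b -> qle b c -> qle a c;
  qle_antisym : forall a b, qle a b -> qle b a -> a = b;
  qsup : (qcar -> Prop) -> qcar;
  qsup_ub : forall (S : qcar -> Prop) x, S x -> qle x (qsup S);
  qsup_least : forall (S : qcar -> Prop) y, (forall x, S x -> qle x y) -> qle (qsup S) y;
  qten : qcar -> qcar -> qcar;
  qk : qcar;
  qten_comm : forall a b, qten a b = qten b a;
  qten_assoc : forall a b c, qten a (qten b c) = qten (qten a b) c;
  qten_unit : forall a, qten qk a = a;
  qten_sup_r : forall a (S : qcar -> Prop),
      qten a (qsup S) = qsup (fun y => exists x, S x /\ y = qten a x);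
  qten_sup_l : forall a (S : qcar -> Prop),
      qten (qsup S) a = qsup (fun y => exists x, S x /\ y = qten x a)
}.

Arguments qle {q}.
Arguments qsup {q}.
Arguments qten {q}.
Arguments qk {q}.

Definition qmeet (V : Quantale) (a b : V) : V := qsup (fun c => qle c a /\ qle c b).

Arguments qmeet {V}.

Definition is_frame (V : Quantale) : Prop :=
  forall (a : V) (S : V -> Prop),
    qmeet a (qsup S) = qsup (fun y => exists x, S x /\ y = qmeet a x).

(* V-group: a V-category with a (not necessarily abelian) group structure,
   the addition being a V-functor. *)
Record VGroup (V : Quantale) := {
  vcar :> Type;
  vd : vcar -> vcar -> V;
  vzero : vcar;
  vadd : vcar -> vcar -> vcar;
  vopp : vcar -> vcar;
  vadd_assoc : forall x y z, vadd x (vadd y z) = vadd (vadd x y) z;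
  vadd_0l : forall x, vadd vzero x = x;
  vadd_0r : forall x, vadd x vzero = x;
  vadd_oppl : forall x, vadd (vopp x) x = vzero;
  vadd_oppr : forall x, vadd x (vopp x) = vzero;
  vd_refl : forall x, qle qk (vd x x);
  vd_trans : forall x x' x'', qle (qten (vd x x') (vd x' x'')) (vd x x'');
  vd_add : forall x1 x2 x1' x2',
      qle (qten (vd x1 x2) (vd x1' x2')) (vd (vadd x1 x1') (vadd x2 x2'))
}.

Arguments vd {V v}.
Arguments vadd {V v}.

Definition is_vhom (V : Quantale) (X Y : VGroup V) (f : X -> Y) : Prop :=
  (forall x y : X, f (vadd x y) = vadd (f x) (f y)) /\
  (forall x x' : X, qle (vd x x') (vd (f x) (f x'))).

Arguments is_vhom {V X Y}.

Definition is_symmetric (V : Quantale) (X : VGroup V) : Prop :=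
  forall x x' : X, vd x x' = vd x' x.

Arguments is_symmetric {V}.

Definition sym_reflective (V : Quantale) : Prop :=
  forall X : VGroup V,
    exists (R : VGroup V) (eta : X -> R),
      is_symmetric R /\ is_vhom eta /\
      forall (Y : VGroup V) (f : X -> Y),
        is_symmetric Y -> is_vhom f ->
        exists g : R -> Y,
          is_vhom g /\ (forall x, g (eta x) = f x) /\
          (forall g' : R -> Y, is_vhom g' -> (forall x, g' (eta x) = f x) ->
             forall r, g' r = g r).

Definition sym_coreflective (V : Quantale) : Prop :=
  forall X : VGroup V,
    exists (C : VGroup V) (eps : C -> X),
      is_symmetric C /\ is_vhom eps /\
      forall (Y : VGroup V) (f : Y -> X),
        is_symmetric Y -> is_vhom f ->
        exists g : Y -> C,
          is_vhom g /\ (forall y, eps (g y) = f y) /\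
          (forall g' : Y -> C, is_vhom g' -> (forall y, eps (g' y) = f y) ->
             forall y, g' y = g y).

(* Main.v *)
Require Import Defs.

Section S.
Variable V : Quantale.

Lemma ten_mono_l (a b c : V) : qle a b -> qle (qten a c) (qten b c).
Proof.
  intro H.
  assert (E : qsup (fun x : V => x = a \/ x = b) = b).
  { apply qle_antisym.
    - apply qsup_least. intros x [->| ->]; [exact H| apply qle_refl].
    - apply qsup_ub. now right. }
  rewrite <- E, qten_sup_l. apply qsup_ub. exists a. split; auto.
Qed.

Lemma ten_mono (a b c d : V) : qle a b -> qle c d -> qle (qten a c) (qten b d).
Proof.
  intros H1 H2. apply qle_trans with (qten b c). now apply ten_mono_l.
  rewrite (qten_comm _ b c), (qten_comm _ b d). now apply ten_mono_l.
Qed.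

Lemma qmeet_le1 (a b : V) : qle (qmeet a b) a.
Proof. apply qsup_least. intros x [H _]; exact H. Qed.
Lemma qmeet_le2 (a b : V) : qle (qmeet a b) b.
Proof. apply qsup_least. intros x [_ H]; exact H. Qed.
Lemma qmeet_glb (a b c : V) : qle c a -> qle c b -> qle c (qmeet a b).
Proof. intros. apply qsup_ub. auto. Qed.
Lemma qmeet_comm (a b : V) : qmeet a b = qmeet b a.
Proof. apply qle_antisym; apply qmeet_glb; auto using qmeet_le1, qmeet_le2. Qed.

Section Refl.
Variable X : VGroup V.

Definition rd (x y : X) : V :=
  qsup (fun c => forall (Y : VGroup V) (f : X -> Y), is_symmetric Y -> is_vhom f ->
           qle c (vd (f x) (f y))).

Lemma rd_le (x y : X) (Y : VGroup V) (f : X -> Y) : is_symmetric Y -> is_vhom f ->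
  qle (rd x y) (vd (f x) (f y)).
Proof. intros. apply qsup_least. intros c Hc. now apply Hc. Qed.

Lemma rd_ge (x y : X) (c : V) : (forall (Y : VGroup V) (f : X -> Y), is_symmetric Y -> is_vhom f ->
           qle c (vd (f x) (f y))) -> qle c (rd x y).
Proof. intro H. apply qsup_ub. exact H. Qed.

Definition RX : VGroup V.
Proof.
  refine (@Build_VGroup V (vcar X) rd (vzero X) (@vadd V X) (@vopp V X)
    (@vadd_assoc V X) (@vadd_0l V X) (@vadd_0r V X) (@vadd_oppl V X) (@vadd_oppr V X) _ _ _).
  - intro x. apply rd_ge. intros. apply vd_refl.
  - intros x x' x''. apply rd_ge. intros Y f HY Hf.
    eapply qle_trans; [|apply vd_trans].
    apply ten_mono; now apply rd_le.
  - intros x1 x2 x1' x2'. apply rd_ge. intros Y f HY Hf.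
    rewrite !(proj1 Hf).
    eapply qle_trans; [|apply vd_add].
    apply ten_mono; now apply rd_le.
Defined.
End Refl.

Lemma refl_ok : sym_reflective V.
Proof.
  intro X. exists (RX X), (fun x => x). split; [|split].
  - intros x x'. simpl. apply qle_antisym; apply rd_ge; intros Y f HY Hf;
      rewrite HY; now apply rd_le.
  - split; [reflexivity|]. intros x x'. simpl. apply rd_ge. intros Y f HY Hf.
    apply (proj2 Hf).
  - intros Y f HY Hf. exists f. split; [|split].
    + split; [exact (proj1 Hf)|]. intros x x'. simpl. now apply rd_le.
    + reflexivity.
    + intros g' _ Hg r. exact (Hg r).
Qed.

Section Coref.
Variable X : VGroup V.
Definition CX : VGroup V.
Proof.
  refine (@Build_VGroup V (vcar X) (fun x y => qmeet (vd x y) (vd y x)) (vzero X) (@vadd V X) (@vopp V X)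
    (@vadd_assoc V X) (@vadd_0l V X) (@vadd_0r V X) (@vadd_oppl V X) (@vadd_oppr V X) _ _ _).
  - intro x. apply qmeet_glb; apply vd_refl.
  - intros x x' x''. apply qmeet_glb.
    + eapply qle_trans; [|apply vd_trans]. apply ten_mono; apply qmeet_le1.
    + eapply qle_trans; [|apply vd_trans]. rewrite qten_comm.
      apply ten_mono; apply qmeet_le2.
  - intros x1 x2 x1' x2'. apply qmeet_glb.
    + eapply qle_trans; [|apply vd_add]. apply ten_mono; apply qmeet_le1.
    + eapply qle_trans; [|apply vd_add]. apply ten_mono; apply qmeet_le2.
Defined.
End Coref.

Lemma coref_ok : sym_coreflective V.
Proof.
  intro X. exists (CX X), (fun x => x). split; [|split].
  - intros x x'. simpl. apply qmeet_comm.
  - split; [reflexivity|]. intros x x'. simpl. apply qmeet_le1.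
  - intros Y f HY Hf. exists f. split; [|split].
    + split; [exact (proj1 Hf)|]. intros x x'. simpl. apply qmeet_glb.
      * apply (proj2 Hf).
      * rewrite HY. apply (proj2 Hf).
    + reflexivity.
    + intros g' _ Hg r. exact (Hg r).
Qed.
End S.

Theorem proposition3p5 (V : Quantale) (HV : is_frame V) :
  sym_reflective V /\ sym_coreflective V.
Proof. split; [apply refl_ok | apply coref_ok]. Qed.
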